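(* Let $\frac12\le\alpha\le1$ and let $M\in\mathcal{M}^*_{\mathcal{L}}(\alpha)$ be a Latin array of order $n$. If $M$ is not focused, then there exists a cell $(i,j)$ such that $M_{ij}$ is a clone and $|R_i(M)\cup C_j(M)|\ge(\alpha+1)n-1$.
   Context: An array of order $n$ is an $n\times n$ array with a symbol in each cell; an entry is a triple $(i,j,A_{ij})$. An array is Latin if no symbol appears more than once in any row or column; $\mathcal{L}$ denotes the class of all square Latin arrays. A transversal of an $m\times m$ array is a set of $m$ entries, no two agreeing in row, column, or symbol; an array is transversal-free if it has no transversal. A symbol is a singleton if it occurs exactly once in the array and a clone otherwise; $M_{ij}$ is called a singleton/clone according to the symbol in cell $(i,j)$. $R_i(M)$, $C_j(M)$ are the sets of symbols in row $i$ and column $j$. $A(i\mid j)$ is the array obtained by deleting row $i$ and column $j$, and $\Psi_{ij}(A)$ is the set of symbols appearing in $A$ but not in $A(i\mid j)$. A Latin array $L$ of order $n$ is focused if every singleton of $L$ occurs in a row or a column of $L$ that contains only singletons, and $|\Psi_{ij}(L)|=2n-1$ for some $(i,j)$. For $\frac12\le\alpha\le1$, $\mathcal{M}_{\mathcal{L}}(\alpha)$ is the set of transversal-free arrays in $\mathcal{L}$ whose number of distinct symbols is at least $\alpha$ times the number of cells, and $\mathcal{M}^*_{\mathcal{L}}(\alpha)$ consists of those $A\in\mathcal{M}_{\mathcal{L}}(\alpha)$ such that no array in $\mathcal{M}_{\mathcal{L}}(\alpha)$ has smaller order than $A$, and no array in $\mathcal{M}_{\mathcal{L}}(\alpha)$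 of the same order as $A$ has more distinct symbols than $A$. *)

(* Defs.v *)
From HB Require Import structures.
From mathcomp Require Import all_boot all_order all_algebra.
Set Implicit Arguments. Unset Strict Implicit. Unset Printing Implicit Defensive.
Import Order.TTheory GRing.Theory Num.Theory.

Definition array (n : nat) := 'I_n -> 'I_n -> nat.

Definition latin n (A : array n) : Prop :=
  (forall i j j', A i j = A i j' -> j = j') /\
  (forall i i' j, A i j = A i' j -> i = i').

Definition is_transversal n (A : array n) (T : {set 'I_n * 'I_n}) : Prop :=
  #|T| = n /\
  (forall c d, c \in T -> d \in T -> c != d ->
     [/\ c.1 != d.1, c.2 != d.2 & A c.1 c.2 != A d.1 d.2]).

Definition transversal_free n (A : array n) : Prop :=
  forall T, ~ is_transversal A T.

Definition cells_syms n (A : array n) : seq nat :=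
  [seq A i j | i <- enum 'I_n, j <- enum 'I_n].

Definition nsym n (A : array n) : nat := size (undup (cells_syms A)).

Definition singleton n (A : array n) (s : nat) : bool :=
  count_mem s (cells_syms A) == 1%N.

Definition clone n (A : array n) (s : nat) : bool :=
  (s \in cells_syms A) && ~~ singleton A s.

Definition row_syms n (A : array n) (i : 'I_n) : seq nat := [seq A i j | j <- enum 'I_n].
Definition col_syms n (A : array n) (j : 'I_n) : seq nat := [seq A i j | i <- enum 'I_n].

Definition rc_card n (A : array n) (i j : 'I_n) : nat :=
  size (undup (row_syms A i ++ col_syms A j)).

Definition minor_syms n (A : array n) (i j : 'I_n) : seq nat :=
  [seq A k l | k <- [seq k <- enum 'I_n | k != i], l <- [seq l <- enum 'I_n | l != j]].

Definition psi_card n (A : array n) (i j : 'I_n) : nat :=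
  size (undup [seq s <- cells_syms A | s \notin minor_syms A i j]).

Definition focused n (A : array n) : Prop :=
  (forall i j, singleton A (A i j) ->
     (forall j', singleton A (A i j')) \/ (forall i', singleton A (A i' j))) /\
  (exists i j, psi_card A i j = (2 * n - 1)%N).

Definition inM (R : realFieldType) (alpha : R) n (A : array n) : Prop :=
  latin A /\ transversal_free A /\
  (alpha * (n * n)%:R <= (nsym A)%:R)%R.

Definition inMstar (R : realFieldType) (alpha : R) n (A : array n) : Prop :=
  inM alpha A /\
  (forall m (B : array m), inM alpha B -> (n <= m)%N) /\
  (forall B : array n, inM alpha B -> (nsym B <= nsym A)%N).

(* Main.v *)
Require Import Defs.
From mathcomp Require Import all_boot all_order all_algebra.
From mathcomp Require Import zify ring lra.
From Stdlib Require Import Classical.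
Import Order.TTheory GRing.Theory Num.Theory.
Set Implicit Arguments. Unset Strict Implicit. Unset Printing Implicit Defensive.


Lemma size_undup_eqi (T : eqType) (s t : seq T) : s =i t -> size (undup s) = size (undup t).
Proof. move=> h; apply: perm_size; apply: uniq_perm; rewrite ?undup_uniq // => x; by rewrite !mem_undup h. Qed.

Lemma count_split (T : Type) (a b : pred T) s :
  count a s = count (fun x => a x && b x) s + count (fun x => a x && ~~ b x) s.
Proof. elim: s => //= x s ->; case: (a x); case: (b x) => /=; lia. Qed.

Lemma count_disj (T : Type) (a b : pred T) s : (forall x, a x -> ~~ b x) -> count a s + count b s <= size s.
Proof.
move=> h; elim: s => //= x s IH; case ax: (a x); last by case: (b x) => /=; lia.
by move: (h x ax) => /negbTE -> /=; lia.
Qed.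

Lemma undup_cat_size (T : eqType) (s1 s2 : seq T) : uniq s1 -> uniq s2 ->
  size (undup (s1 ++ s2)) + count (mem s1) s2 = size s1 + size s2.
Proof.
move=> u1 u2.
have -> : size (undup (s1 ++ s2)) = size (s1 ++ filter (predC (mem s1)) s2).
  apply: perm_size; apply: uniq_perm; rewrite ?undup_uniq //.
    rewrite cat_uniq u1 filter_uniq // andbT; apply/hasPn => x; rewrite mem_filter /=.
    by case/andP.
  move=> x; rewrite mem_undup !mem_cat mem_filter /=; by case: (x \in s1).
by rewrite size_cat size_filter -addnA [X in _ + X]addnC count_predC.
Qed.

Lemma count_mem_sym (T : eqType) (s1 s2 : seq T) : uniq s1 -> uniq s2 ->
  count (mem s1) s2 = count (mem s2) s1.
Proof.
move=> u1 u2; rewrite -!size_filter; apply: perm_size; apply: uniq_perm; rewrite ?filter_uniq //.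
by move=> x; rewrite !mem_filter andbC.
Qed.

Lemma undup_split (T : eqType) (s t : seq T) : {subset t <= s} ->
  size (undup s) = size (undup t) + size (undup [seq x <- s | x \notin t]).
Proof.
move=> sub; rewrite -size_cat; apply: perm_size; apply: uniq_perm; rewrite ?undup_uniq //.
  rewrite cat_uniq !undup_uniq andbT /=; apply/hasPn => x; rewrite mem_undup mem_filter.
  by case/andP => /negP h _; apply/negP; rewrite mem_undup.
move=> x; rewrite mem_cat !mem_undup mem_filter; case xt: (x \in t) => //=.
by rewrite (sub _ xt).
Qed.


Lemma cells_count n (M : array n) (P : pred nat) :
  count P (cells_syms M) = \sum_(a < n) \sum_(b < n) P (M a b).
Proof.
rewrite /cells_syms -sum1_count big_mkcond big_allpairs_dep /= big_enum /=.
apply: eq_bigr => a _; rewrite big_enum /=; apply: eq_bigr => b _; by case: (P _).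
Qed.

Lemma row_count n (M : array n) a (P : pred nat) :
  count P (row_syms M a) = \sum_(b < n) P (M a b).
Proof.
rewrite /row_syms -sum1_count big_mkcond big_map big_enum /=.
apply: eq_bigr => b _; by case: (P _).
Qed.

Lemma col_count n (M : array n) b (P : pred nat) :
  count P (col_syms M b) = \sum_(a < n) P (M a b).
Proof.
rewrite /col_syms -sum1_count big_mkcond big_map big_enum /=.
apply: eq_bigr => a _; by case: (P _).
Qed.

Lemma row_uniq n (M : array n) a : latin M -> uniq (row_syms M a).
Proof. case=> h1 _; rewrite map_inj_uniq ?enum_uniq // => x y; exact: h1. Qed.
Lemma col_uniq n (M : array n) b : latin M -> uniq (col_syms M b).
Proof. case=> _ h2; rewrite map_inj_uniq ?enum_uniq // => x y; exact: h2. Qed.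
Lemma row_size n (M : array n) a : size (row_syms M a) = n.
Proof. by rewrite size_map size_enum_ord. Qed.
Lemma col_size n (M : array n) a : size (col_syms M a) = n.
Proof. by rewrite size_map size_enum_ord. Qed.
Lemma row_mem n (M : array n) a b : M a b \in row_syms M a.
Proof. by apply: map_f; rewrite mem_enum. Qed.
Lemma col_mem n (M : array n) a b : M a b \in col_syms M b.
Proof. by apply: map_f; rewrite mem_enum. Qed.
Lemma row_memP n (M : array n) a s : s \in row_syms M a -> exists b, s = M a b.
Proof. by case/mapP => b _ ->; exists b. Qed.
Lemma col_memP n (M : array n) b s : s \in col_syms M b -> exists a, s = M a b.
Proof. by case/mapP => a _ ->; exists a. Qed.
Lemma cells_mem n (M : array n) a b : M a b \in cells_syms M.
Proof. by apply: (allpairs_f (fun k l => M k l)); rewrite mem_enum. Qed.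
Lemma cells_memP n (M : array n) s : s \in cells_syms M -> exists a b, s = M a b.
Proof. by case/allpairsP => [[a b] [_ _ ->]]; exists a, b. Qed.

Lemma single_cell n (M : array n) a b c d :
  singleton M (M a b) -> M c d = M a b -> c = a /\ d = b.
Proof.
rewrite /singleton cells_count pair_big /= => h e.
case: (eqVneq (c, d) (a, b)) => [[-> ->] //|ne].
move: h; rewrite (bigD1 (a, b)) //= (bigD1 (c, d)) /=; last by rewrite ne.
by rewrite e eqxx.
Qed.

Definition minorA n' (M : array n'.+1) (i j : 'I_n'.+1) : array n' :=
  fun k l => M (lift i k) (lift j l).

Lemma minor_cells n' (M : array n'.+1) i j : cells_syms (minorA M i j) =i minor_syms M i j.
Proof.
move=> s; apply/allpairsP/allpairsP.
  case=> [[k l] [_ _ ->]]; exists (lift i k, lift j l).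
  by split=> //; rewrite mem_filter mem_enum andbT eq_sym neq_lift.
case=> [[k l] [/= hk hl ->]]; move: hk hl; rewrite !mem_filter => /andP [hk _] /andP [hl _].
have hk' : i != k by rewrite eq_sym.
have hl' : j != l by rewrite eq_sym.
have [k' -> _] := unlift_some (hk' : i != k).
by have [l' -> _] := unlift_some (hl' : j != l); exists (k', l'); rewrite !mem_enum.
Qed.

Lemma minor_latin n' (M : array n'.+1) i j : latin M -> latin (minorA M i j).
Proof.
case=> h1 h2; split => [k l l' | k k' l]; rewrite /minorA => e.
  exact: lift_inj (h1 _ _ _ e).
exact: lift_inj (h2 _ _ _ e).
Qed.

Lemma minor_tf n' (M : array n'.+1) i j : transversal_free M -> singleton M (M i j) ->
  transversal_free (minorA M i j).
Proof.
move=> tf hs T [hT hp].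
pose f := fun p : 'I_n' * 'I_n' => (lift i p.1, lift j p.2).
have finj : injective f by move=> [a b] [c d] e; have := congr1 fst e; have := congr1 snd e; by rewrite /= => /lift_inj -> /lift_inj ->.
have nin : (i, j) \notin f @: T.
  apply/imsetP => [[p _ e]]; move: (congr1 fst e) => /= /eqP; by rewrite (negbTE (neq_lift _ _)).
apply: (tf ((i, j) |: (f @: T))); split.
  by rewrite cardsU1 nin (card_imset _ finj) hT.
move=> c d /setU1P [-> | /imsetP [p pT ->]] /setU1P [-> | /imsetP [q qT ->]] ne.
- by rewrite eqxx in ne.
- split; rewrite /= ?neq_lift //; apply/eqP => e.
  have [e1 _] := single_cell hs (esym e).
  by move: (neq_lift i q.1); rewrite e1 eqxx.
- split; [by rewrite /= eq_sym neq_lift | by rewrite /= eq_sym neq_lift | apply/eqP => e].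
  case: (single_cell hs e) => /= e1 _.
  by move: (neq_lift i p.1); rewrite e1 eqxx.
- have npq : p != q by apply: contraNneq ne => ->.
  have [h1 h2 h3] := hp p q pT qT npq.
  by split; rewrite /= ?(inj_eq lift_inj).
Qed.


Lemma minor_sub n (M : array n) i j : {subset minor_syms M i j <= cells_syms M}.
Proof. by move=> x /allpairsP [[k l] [_ _ ->]]; apply: cells_mem. Qed.

Lemma psi_big (R : realFieldType) (alpha : R) n' (M : array n'.+1) i j :
  inMstar alpha M -> singleton M (M i j) ->
  (alpha * (2 * n'%:R + 1) < (psi_card M i j)%:R)%R.
Proof.
case=> [[hl [htf hN]] [hmin _]] hs.
set B := minorA M i j.
have nB : ~ (alpha * (n' * n')%:R <= (nsym B)%:R)%R.
  move=> h; have := hmin n' B (conj (minor_latin i j hl) (conj (minor_tf htf hs) h)).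
  by rewrite ltnn.
have e : nsym M = nsym B + psi_card M i j.
  rewrite /nsym /psi_card (undup_split (@minor_sub _ M i j)); congr (_ + _).
  apply: size_undup_eqi => x; symmetry; exact: minor_cells.
move/negP: nB; rewrite -ltNge => nB.
move: hN; rewrite e natrD natrM -natr1 => hN.
move: nB; rewrite natrM => nB.
lra.
Qed.


Lemma rc_inter n (M : array n) a b : latin M ->
  rc_card M a b + count (mem (row_syms M a)) (col_syms M b) = 2 * n.
Proof. move=> hl; rewrite /rc_card undup_cat_size ?row_uniq ?col_uniq // row_size col_size; lia. Qed.

Lemma in_minor n (M : array n) i j k l : k != i -> l != j -> M k l \in minor_syms M i j.
Proof.
move=> hk hl; apply: (allpairs_f (fun k l => M k l)); by rewrite mem_filter mem_enum andbT.
Qed.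

Lemma sing_notin_minor n (M : array n) i j a b : singleton M (M a b) -> (a = i \/ b = j) ->
  M a b \notin minor_syms M i j.
Proof.
move=> hs hab; apply/negP => /allpairsP [[k l] [/= hk hl e]].
have [ek el] := single_cell hs (esym e).
move: hk hl; rewrite !mem_filter ek el; case: hab => ->; by rewrite eqxx ?andbF.
Qed.

Lemma psi_le n (M : array n) i j : singleton M (M i j) ->
  psi_card M i j + 1 <= count (fun s => s \notin minor_syms M i j) (row_syms M i)
                       + count (fun s => s \notin minor_syms M i j) (col_syms M j).
Proof.
move=> hs; set P := (fun s => s \notin minor_syms M i j).
have sub : {subset undup [seq s <- cells_syms M | s \notin minor_syms M i j] <=
   [seq s <- row_syms M i | P s] ++ [seq s <- col_syms M j | P s && (s \notin row_syms M i)]}.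
  move=> x; rewrite mem_undup mem_filter => /andP [hx /cells_memP [a [b ex]]].
  rewrite mem_cat !mem_filter /P.
  case: (eqVneq a i) => [ea | na].
    by rewrite hx /= ex ea row_mem.
  case: (eqVneq b j) => [eb | nb].
    rewrite hx /=; have -> : x \in col_syms M j by rewrite ex eb col_mem.
    by case: (x \in row_syms M i).
  by move: hx; rewrite ex in_minor.
have := uniq_leq_size (undup_uniq _) sub; rewrite /psi_card size_cat !size_filter => h.
rewrite (count_split P (mem (row_syms M i)) (col_syms M j)).
have : 0 < count (fun x => P x && mem (row_syms M i) x) (col_syms M j).
  rewrite -has_count; apply/hasP; exists (M i j); first exact: col_mem.
  have := @sing_notin_minor _ M i j i j hs (or_introl erefl).
  by move=> h0; apply/andP; split; [exact: h0 | exact: row_mem].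
move: h; set u := count _ (col_syms M j); set v := count _ (col_syms M j).
set w := count P (row_syms M i). lia.
Qed.

Lemma row_part n (M : array n) i j j' : latin M -> j' != j ->
  count (fun s => s \notin minor_syms M i j) (row_syms M i)
  + count (mem (col_syms M j')) (row_syms M i) <= n + 1.
Proof.
move=> hl nj; rewrite (count_split (mem (col_syms M j')) (fun s => s != M i j')).
have h1 : count (fun x => mem (col_syms M j') x && ~~ (x != M i j')) (row_syms M i) <= 1.
  apply: (leq_trans (sub_count (a2 := pred1 (M i j')) _ _)).
    by move=> x /andP [_]; rewrite negbK.
  by rewrite (count_uniq_mem _ (row_uniq _ hl)) ?leq_b1.
have h2 := count_disj (a := fun s => s \notin minor_syms M i j)
   (b := fun x => mem (col_syms M j') x && (x != M i j')) (row_syms M i).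
rewrite row_size in h2.
suff /h2 : forall x, x \notin minor_syms M i j -> ~~ (mem (col_syms M j') x && (x != M i j')).
  move: h1; set u := count _ _; set v := count _ _; set w := count _ _; lia.
move=> x hx; apply/negP => /andP [/col_memP [a ex] na]; subst x.
have ai : a != i by apply: contraNneq na => ->.
by rewrite in_minor in hx.
Qed.

Lemma col_part n (M : array n) i j i' : latin M -> i' != i ->
  count (fun s => s \notin minor_syms M i j) (col_syms M j)
  + count (mem (row_syms M i')) (col_syms M j) <= n + 1.
Proof.
move=> hl ni; rewrite (count_split (mem (row_syms M i')) (fun s => s != M i' j)).
have h1 : count (fun x => mem (row_syms M i') x && ~~ (x != M i' j)) (col_syms M j) <= 1.
  apply: (leq_trans (sub_count (a2 := pred1 (M i' j)) _ _)).
    by move=> x /andP [_]; rewrite negbK.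
  by rewrite (count_uniq_mem _ (col_uniq _ hl)) ?leq_b1.
have h2 := count_disj (a := fun s => s \notin minor_syms M i j)
   (b := fun x => mem (row_syms M i') x && (x != M i' j)) (col_syms M j).
rewrite col_size in h2.
suff /h2 : forall x, x \notin minor_syms M i j -> ~~ (mem (row_syms M i') x && (x != M i' j)).
  move: h1; set u := count _ _; set v := count _ _; set w := count _ _; lia.
move=> x hx; apply/negP => /andP [/row_memP [b ex] nb]; subst x.
have bj : b != j by apply: contraNneq nb => ->.
by rewrite in_minor in hx.
Qed.

Lemma caseA (R : realFieldType) (alpha : R) n' (M : array n'.+1) i j i' j' :
  (alpha <= 1)%R -> inMstar alpha M -> singleton M (M i j) ->
  ~~ singleton M (M i j') -> ~~ singleton M (M i' j) ->
  (forall a b, ~~ singleton M (M a b) ->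
     ((rc_card M a b)%:R < (alpha + 1) * (n'.+1)%:R - 1)%R) -> False.
Proof.
move=> ha1 hM hs hc1 hc2 H.
have hl : latin M by case: hM => [[]].
have nj : j' != j by apply: contraNneq hc1 => ->.
have ni : i' != i by apply: contraNneq hc2 => ->.
have p1 := psi_big hM hs.
have p2 := psi_le hs.
have r1 := row_part i hl nj.
have r2 := col_part j hl ni.
have c1 := rc_inter i j' hl; have c2 := rc_inter i' j hl.
rewrite (count_mem_sym (row_uniq _ hl) (col_uniq _ hl)) in c1.
have h1 := H _ _ hc1; have h2 := H _ _ hc2.
move: p2 r1 r2 c1 c2 h1 h2 p1.
set ps := psi_card _ _ _.
set x := count (fun s => s \notin minor_syms M i j) (row_syms M i).
set y := count (fun s => s \notin minor_syms M i j) (col_syms M j).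
set I1 := count (mem (col_syms M j')) (row_syms M i).
set I2 := count (mem (row_syms M i')) (col_syms M j).
set rc1 := rc_card M i j'; set rc2 := rc_card M i' j.
rewrite -!(ler_nat R) !natrD => p2 r1 r2.
move=> /(congr1 (fun k : nat => (k%:R : R)%R)) c1 /(congr1 (fun k : nat => (k%:R : R)%R)) c2.
move: c1 c2; rewrite !natrD !natrM -!natr1 => c1 c2 h1 h2 p1.
lra.
Qed.


Lemma cells_sum n (M : array n) (F : nat -> nat) :
  \sum_(s <- cells_syms M) F s = \sum_(a < n) \sum_(b < n) F (M a b).
Proof. by rewrite /cells_syms big_allpairs_dep /= big_enum; apply: eq_bigr => a _; rewrite big_enum. Qed.

Lemma undup_sum (s : seq nat) (F : nat -> nat) :
  \sum_(u <- undup s) count_mem u s * F u = \sum_(x <- s) F x.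
Proof.
rewrite -[RHS]big_undup_iterop_count; apply: eq_bigr => u _.
by rewrite Monoid.iteropE iter_addn_0 mulnC.
Qed.

Lemma count_as_sum (T : Type) (P : pred T) s : count P s = \sum_(x <- s) P x.
Proof. by rewrite -sum1_count big_mkcond; apply: eq_bigr => x _; case: (P x). Qed.

Lemma mult_gt0 n (M : array n) u : u \in cells_syms M -> 0 < count_mem u (cells_syms M).
Proof. by move=> h; rewrite -has_count has_pred1. Qed.

Lemma count_eqs n (M : array n) :
  nsym M = count (fun u => ~~ singleton M u) (undup (cells_syms M))
           + \sum_(a < n) \sum_(b < n) singleton M (M a b) /\
  \sum_(a < n) \sum_(b < n) (~~ singleton M (M a b)) + \sum_(a < n) \sum_(b < n) singleton M (M a b) = n * n.
Proof.
split.
  have e : count (fun u => singleton M u) (undup (cells_syms M)) =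
      \sum_(a < n) \sum_(b < n) singleton M (M a b).
    rewrite -(cells_sum M (fun s => singleton M s)) -undup_sum count_as_sum.
    apply: eq_big_seq => u; rewrite mem_undup /=; case h: (singleton M u); last by rewrite muln0.
    by move: h; rewrite /singleton => /eqP ->.
  rewrite /nsym -(count_predC (fun u => ~~ singleton M u)) -e; congr (_ + _).
  by apply: eq_count => u /=; rewrite negbK.
rewrite -big_split /= (eq_bigr (fun _ => n)); last first.
  move=> a _; rewrite -big_split /= (eq_bigr (fun _ => 1)); last by move=> b _; case: (singleton M (M a b)).
  by rewrite sum_nat_const card_ord muln1.
by rewrite sum_nat_const card_ord.
Qed.

Lemma mem_le_count (T : eqType) (x : T) (s : seq T) : (x \in s) <= count_mem x s.
Proof.
elim: s => //= y s IH; rewrite inE eq_sym; case: (y == x) => //=.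
Qed.

Lemma inter_le n (M : array n) a b :
  count (mem (row_syms M a)) (col_syms M b) <= \sum_(a' < n) \sum_(b' < n) (M a' b == M a b').
Proof.
rewrite col_count; apply: leq_sum => a' _.
rewrite (eq_bigr (fun b' => (M a b' == M a' b) : nat)); last by move=> b' _; rewrite eq_sym.
rewrite -(row_count M a (pred1 (M a' b))).
exact: mem_le_count.
Qed.

Lemma count_core n (M : array n) m : latin M ->
  (forall u, u \in cells_syms M -> ~~ singleton M u -> count_mem u (cells_syms M) <= m) ->
  \sum_(a < n) \sum_(b < n) (~~ singleton M (M a b)) * count (mem (row_syms M a)) (col_syms M b)
  + 2 * m * count (fun u => ~~ singleton M u) (undup (cells_syms M))
  <= (m + 2) * \sum_(a < n) \sum_(b < n) (~~ singleton M (M a b)).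
Proof.
move=> hl hm.
have step1 : \sum_(a < n) \sum_(b < n) (~~ singleton M (M a b)) * count (mem (row_syms M a)) (col_syms M b)
   <= \sum_(a < n) \sum_(b < n) (~~ singleton M (M a b)) * count_mem (M a b) (cells_syms M).
  apply: leq_sum => a _.
  apply: (@leq_trans (\sum_(b < n) \sum_(a' < n) \sum_(b' < n)
       (~~ singleton M (M a b')) * (M a' b == M a b'))).
    apply: leq_sum => b _.
    apply: (leq_trans (leq_mul (leqnn _) (inter_le M a b))).
    rewrite big_distrr /=; apply: leq_sum => a' _; rewrite big_distrr /=; apply: leq_sum => b' _.
    case E: (M a' b == M a b'); last by rewrite !muln0.
    case S: (singleton M (M a b')); last by rewrite !muln1 leq_b1.
    have [e1 e2] := single_cell S (eqP E).
    by rewrite e2 S.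
  rewrite (eq_bigr (fun b => \sum_(b' < n) \sum_(a' < n) (~~ singleton M (M a b')) * (M a' b == M a b')));
    last by move=> b _; rewrite exchange_big.
  rewrite exchange_big /=; apply: eq_leq; apply: eq_bigr => b' _.
  rewrite (eq_bigr (fun b => (~~ singleton M (M a b')) *
      \sum_(a' < n) (M a' b == M a b'))); last by move=> b _; rewrite big_distrr.
  rewrite -big_distrr /=; congr (_ * _).
  by rewrite cells_count exchange_big.
apply: (leq_trans (leq_add step1 (leqnn _))).
rewrite -(cells_sum M (fun s => (~~ singleton M s) * count_mem s (cells_syms M))).
rewrite -(cells_sum M (fun s => (~~ singleton M s) : nat)).
rewrite -(undup_sum (cells_syms M) (fun s => (~~ singleton M s) * count_mem s (cells_syms M))).
rewrite -(undup_sum (cells_syms M) (fun s => (~~ singleton M s) : nat)).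
rewrite count_as_sum !big_distrr -big_split /= big_seq [X in _ <= X]big_seq.
apply: leq_sum => u hu; rewrite mem_undup in hu.
have h1 := mult_gt0 hu.
case S: (singleton M u) => /=; first by rewrite !muln0.
have h2 := hm u hu (negbT S).
move: S; rewrite /singleton => /negbT h3.
move: h1 h2 h3; set k := count_mem u _ => h1 h2 h3.
have h4 : 2 <= k by move: h3 h1; clear; case: k => [|[|k]].
rewrite !muln1 !mul1n; nia.
Qed.


Lemma averaging (R : realFieldType) (alpha : R) n (M : array n) r :
  (alpha <= 1)%R -> latin M -> (alpha * (n * n)%:R <= (nsym M)%:R)%R ->
  \sum_(a < n) \sum_(b < n) singleton M (M a b) = r * n ->
  (forall u, u \in cells_syms M -> ~~ singleton M u -> count_mem u (cells_syms M) <= n - r) ->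
  (forall a b, ~~ singleton M (M a b) -> count (mem (row_syms M a)) (col_syms M b) <= n - r) ->
  (exists a b, ~~ singleton M (M a b)) ->
  (forall a b, ~~ singleton M (M a b) -> ((rc_card M a b)%:R < (alpha + 1) * n%:R - 1)%R) -> False.
Proof.
move=> ha hl hN hS hm hi [a0 [b0 h0]] H.
have [eN eK] := count_eqs M.
have core := count_core hl hm.
have n0 : 0 < n by apply: (leq_ltn_trans (leq0n a0) (ltn_ord a0)).
have hr : r <= n.
  have : r * n <= n * n by rewrite -hS -eK leq_addl.
  by rewrite leq_pmul2r.
set x : R := ((1 - alpha) * n%:R + 1)%R.
have hI : forall a b, ~~ singleton M (M a b) ->
    (x < (count (mem (row_syms M a)) (col_syms M b))%:R)%R.
  move=> a b hc; have := rc_inter a b hl; move/(congr1 (fun k : nat => (k%:R : R)%R)).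
  rewrite natrD natrM => e; have := H a b hc; rewrite /x; lra.
have hK : ((\sum_(a < n) \sum_(b < n) (~~ singleton M (M a b)))%:R * x <=
   (\sum_(a < n) \sum_(b < n) (~~ singleton M (M a b)) * count (mem (row_syms M a)) (col_syms M b))%:R)%R.
  rewrite !natr_sum mulr_suml; apply: ler_sum => a _.
  rewrite !natr_sum mulr_suml; apply: ler_sum => b _.
  case hc: (singleton M (M a b)) => /=; first by rewrite !mul0n mul0r.
  by rewrite mul1n mul1r; apply: ltW; apply: hI; rewrite hc.
have p0 := hI _ _ h0; have p1 := hi _ _ h0.
move: core hK eN eK hS p0 p1 hN.
set SI := \sum_(a < n) \sum_(b < n) _ * _.
set K := \sum_(a < n) \sum_(b < n) nat_of_bool (~~ _).
set S := \sum_(a < n) \sum_(b < n) nat_of_bool _.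
set c := count _ _.
move=> core hK eN eK hS p0 p1 hN.
have {}core : ((SI%:R + 2 * (n%:R - r%:R) * c%:R) <= ((n%:R - r%:R) + 2) * K%:R :> R)%R.
  by have := core; rewrite -(ler_nat R) !natrD !natrM !natrD !natrB.
have {}p1 : ((count (mem (row_syms M a0)) (col_syms M b0))%:R <= n%:R - r%:R :> R)%R.
  by rewrite -natrB // ler_nat.
move/(congr1 (fun k : nat => (k%:R : R)%R)): eN; rewrite natrD => eN.
move/(congr1 (fun k : nat => (k%:R : R)%R)): eK; rewrite natrD natrM => eK.
move/(congr1 (fun k : nat => (k%:R : R)%R)): hS; rewrite natrM => hS.
rewrite natrM in hN.
rewrite /x in hK p0.
have Km : (K%:R = (n%:R - r%:R) * n%:R :> R)%R by lra.
rewrite Km in hK core.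
have nR : (0 < n%:R :> R)%R by rewrite ltr0n.
have h1a : (0 <= (1 - alpha) * n%:R :> R)%R by apply: mulr_ge0; [lra | rewrite ler0n].
have m0 : (0 < n%:R - r%:R :> R)%R by lra.

have st1 : ((n%:R - r%:R) * (n%:R * ((1 - alpha) * n%:R + 1) + 2 * c%:R
             - ((n%:R - r%:R) + 2) * n%:R) <= 0 :> R)%R by lra.
rewrite pmulr_rle0 // in st1.
have st2 : (n%:R * (alpha * n%:R - r%:R - 1) <= 0 :> R)%R by lra.
rewrite pmulr_rle0 // in st2.
lra.
Qed.


Lemma full_cross n (M : array n) a b : latin M ->
  (forall c, singleton M (M a c)) -> (forall d, singleton M (M d b)) ->
  psi_card M a b = 2 * n - 1.
Proof.
move=> hl hr hc.
have e : psi_card M a b = rc_card M a b.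
  rewrite /psi_card /rc_card; apply: size_undup_eqi => x; rewrite mem_filter mem_cat.
  apply/andP/orP.
    case=> hx /cells_memP [k [l ex]].
    case: (eqVneq k a) => [ek | nk]; first by left; rewrite ex ek row_mem.
    case: (eqVneq l b) => [el | nl]; first by right; rewrite ex el col_mem.
    by move: hx; rewrite ex in_minor.
  case=> [/row_memP [c ->] | /col_memP [d ->]]; split; rewrite ?cells_mem //.
    exact: sing_notin_minor (hr c) (or_introl erefl).
  exact: sing_notin_minor (hc d) (or_intror erefl).
have hi : count (mem (row_syms M a)) (col_syms M b) = 1.
  rewrite (@eq_in_count _ _ (pred1 (M a b))); last first.
    move=> x /col_memP [d ->] /=; apply/idP/eqP.
      by case/row_memP => c e1; have [-> ->] := single_cell (hr c) e1.
    by move=> ->; rewrite row_mem.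
  by rewrite (count_uniq_mem _ (col_uniq _ hl)) col_mem.
have := rc_inter a b hl; rewrite hi e; lia.
Qed.

Lemma sum_neg n (P : pred 'I_n) : \sum_(a < n) (~~ P a) = n - \sum_(a < n) P a.
Proof.
have : \sum_(a < n) (~~ P a) + \sum_(a < n) P a = n.
  rewrite -big_split /= (eq_bigr (fun _ => 1)); last by move=> a _; case: (P a).
  by rewrite sum_nat_const card_ord muln1.
lia.
Qed.

Lemma row_facts n (M : array n) : latin M ->
  (forall a b, singleton M (M a b) ->
     (forall c, singleton M (M a c)) \/ (forall d, singleton M (M d b))) ->
  (forall b, exists d, ~~ singleton M (M d b)) ->
  [/\ \sum_(a < n) \sum_(b < n) singleton M (M a b) = (\sum_(a < n) [forall c, singleton M (M a c)]) * n,
      (forall u, u \in cells_syms M -> ~~ singleton M u ->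
          count_mem u (cells_syms M) <= n - \sum_(a < n) [forall c, singleton M (M a c)]) &
      (forall a b, ~~ singleton M (M a b) ->
          count (mem (row_syms M a)) (col_syms M b) <= n - \sum_(a < n) [forall c, singleton M (M a c)])].
Proof.
move=> hl P1 nc; split.
- rewrite big_distrl /=; apply: eq_bigr => a _.
  case: (boolP [forall c, singleton M (M a c)]) => h /=.
    rewrite mul1n (eq_bigr (fun _ => 1)); first by rewrite sum_nat_const card_ord muln1.
    by move=> b _; rewrite (forallP h b).
  rewrite mul0n big1 // => b _; case S: (singleton M (M a b)) => //.
  case: (P1 a b S) => [hr | hc].
    by exfalso; move/negP: h; apply; apply/forallP.
  by have [d] := nc b; rewrite hc.
- move=> u hu hs; rewrite cells_count -sum_neg; apply: leq_sum => a _.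
  case: (boolP [forall c, singleton M (M a c)]) => h /=.
    rewrite big1 // => b _; case: eqP => // e.
    by move: hs; rewrite -e (forallP h b).
  have := row_count M a (pred1 u); rewrite /= => <-.
  by rewrite (count_uniq_mem _ (row_uniq _ hl)) leq_b1.
- move=> a b hs; rewrite col_count -sum_neg; apply: leq_sum => a' _.
  apply: (@leq_trans (M a' b \in row_syms M a)) => //.
  case: (boolP [forall c, singleton M (M a' c)]) => h /=; last by apply: leq_b1.
  case E: (M a' b \in row_syms M a) => //.
  case/row_memP: E => c e.
  have [e1 e2] := single_cell (forallP h b) (esym e).
  by move: hs; rewrite e1 (forallP h b).
Qed.

Lemma col_facts n (M : array n) : latin M ->
  (forall a b, singleton M (M a b) ->
     (forall c, singleton M (M a c)) \/ (forall d, singleton M (M d b))) ->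
  (forall a, exists c, ~~ singleton M (M a c)) ->
  [/\ \sum_(a < n) \sum_(b < n) singleton M (M a b) = (\sum_(b < n) [forall d, singleton M (M d b)]) * n,
      (forall u, u \in cells_syms M -> ~~ singleton M u ->
          count_mem u (cells_syms M) <= n - \sum_(b < n) [forall d, singleton M (M d b)]) &
      (forall a b, ~~ singleton M (M a b) ->
          count (mem (row_syms M a)) (col_syms M b) <= n - \sum_(b < n) [forall d, singleton M (M d b)])].
Proof.
move=> hl P1 nr; split.
- rewrite exchange_big big_distrl /=; apply: eq_bigr => b _.
  case: (boolP [forall d, singleton M (M d b)]) => h /=.
    rewrite mul1n (eq_bigr (fun _ => 1)); first by rewrite sum_nat_const card_ord muln1.
    by move=> a _; rewrite (forallP h a).
  rewrite mul0n big1 // => a _; case S: (singleton M (M a b)) => //.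
  case: (P1 a b S) => [hr | hc].
    by have [c] := nr a; rewrite hr.
  by exfalso; move/negP: h; apply; apply/forallP.
- move=> u hu hs; rewrite cells_count exchange_big -sum_neg; apply: leq_sum => b _.
  case: (boolP [forall d, singleton M (M d b)]) => h /=.
    rewrite big1 // => a _; case: eqP => // e.
    by move: hs; rewrite -e (forallP h a).
  have := col_count M b (pred1 u); rewrite /= => <-.
  by rewrite (count_uniq_mem _ (col_uniq _ hl)) leq_b1.
- move=> a b hs; rewrite (count_mem_sym (row_uniq a hl) (col_uniq b hl)).
  rewrite row_count -sum_neg; apply: leq_sum => b' _.
  apply: (@leq_trans (M a b' \in col_syms M b)) => //.
  case: (boolP [forall d, singleton M (M d b')]) => h /=; last by apply: leq_b1.
  case E: (M a b' \in col_syms M b) => //.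
  case/col_memP: E => d e.
  have [e1 e2] := single_cell (forallP h a) (esym e).
  by move: hs; rewrite e2 (forallP h a).
Qed.


Unset Implicit Arguments.

Theorem mainTheorem11 (R : realFieldType) (alpha : R)
  (ha1 : (2%:R^-1 <= alpha)%R) (ha2 : (alpha <= 1)%R)
  (n : nat) (M : array n) :
  inMstar alpha M -> ~ focused M ->
  exists i j : 'I_n, clone M (M i j) /\
    ((alpha + 1) * n%:R - 1 <= (rc_card M i j)%:R)%R.
Proof.
move=> hM hnf.
have hl : latin M by case: hM => [[]].
have hN : (alpha * (n * n)%:R <= (nsym M)%:R)%R by case: hM => [[_ []]].
apply: NNPP => hneg.
have H : forall a b, ~~ singleton M (M a b) ->
    ((rc_card M a b)%:R < (alpha + 1) * n%:R - 1)%R.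
  move=> a b hc; rewrite ltNge; apply/negP => hge; apply: hneg; exists a, b; split => //.
  by rewrite /clone cells_mem hc.
case: n M hM hnf hl hN H {hneg} => [|n'] M hM hnf hl hN H.
  case: hM => [[_ [tf _]] _]; apply: (tf set0); split; first by rewrite cards0.
  by move=> c d; rewrite in_set0.
case: (classic (forall i j, singleton M (M i j) ->
     (forall j', singleton M (M i j')) \/ (forall i', singleton M (M i' j)))) => P1; last first.
  have [i] := not_all_ex_not _ _ P1 => {}P1.
  have [j] := not_all_ex_not _ _ P1 => {}P1.
  have [hs P2] := imply_to_and _ _ P1.
  have [hr hc] := not_or_and _ _ P2.
  have [j' hj'] := not_all_ex_not _ _ hr.
  have [i' hi'] := not_all_ex_not _ _ hc.
  have c1 : ~~ singleton M (M i j') by apply/negP.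
  have c2 : ~~ singleton M (M i' j) by apply/negP.
  exact: (caseA ha2 hM hs c1 c2 H).
have nP2 : forall i j, psi_card M i j <> 2 * n'.+1 - 1.
  by move=> i j e; apply: hnf; split => //; exists i, j.
case: (classic (exists b, forall d, singleton M (M d b))) => [[b hb] | nc].
  case: (classic (exists a, forall c, singleton M (M a c))) => [[a ha] | nr].
    by apply: (nP2 a b); apply: full_cross.
  have nr' : forall a, exists c, ~~ singleton M (M a c).
    move=> a; apply: NNPP => h; apply: nr; exists a => c; apply: NNPP => h2; apply: h.
    by exists c; apply/negP.
  have [f1 f2 f3] := col_facts hl P1 nr'.
  have [c hc] := nr' ord0.
  by apply: (averaging ha2 hl hN f1 f2 f3 _ H); exists ord0, c.
have nc' : forall b, exists d, ~~ singleton M (M d b).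
  move=> b; apply: NNPP => h; apply: nc; exists b => d; apply: NNPP => h2; apply: h.
  by exists d; apply/negP.
have [f1 f2 f3] := row_facts hl P1 nc'.
have [d hd] := nc' ord0.
by apply: (averaging ha2 hl hN f1 f2 f3 _ H); exists d, ord0.
Qed.
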